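(* Let $(B,\lfloor\cdot,\cdot\rfloor)$ be an SSD space with quadratic form $q$ and let $P\subset B$ be an affine $q$-positive set. Then $P$ is premaximally $q$-positive if and only if $P^{\pi}$ is an affine subset of $B$.
   Context: An SSD space is a pair $(B,\lfloor\cdot,\cdot\rfloor)$ with $B$ a nonzero real vector space and $\lfloor\cdot,\cdot\rfloor$ a symmetric bilinear form; $q(b)=\frac12\lfloor b,b\rfloor$. A nonempty $A\subset B$ is $q$-positive if $q(b-c)\ge0$ for all $b,c\in A$; maximally $q$-positive if $q$-positive and not properly contained in another $q$-positive set. $A^{\pi}:=\{b\in B: q(b-a)\ge0\ \forall a\in A\}$. $P$ is premaximally $q$-positive if there is a unique maximally $q$-positive set containing $P$. *)

(* Defs.v *)
From HB Require Import structures.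
From mathcomp Require Import all_boot all_order all_algebra.
From mathcomp Require Import boolp classical_sets reals.
Set Implicit Arguments. Unset Strict Implicit. Unset Printing Implicit Defensive.
Import Order.TTheory GRing.Theory Num.Theory.
Local Open Scope ring_scope.
Local Open Scope classical_set_scope.

Section SSD.
Variables (R : realType) (V : lmodType R).

Definition sym_bilinear (f : V -> V -> R) : Prop :=
  (forall (a : R) (x y z : V), f (a *: x + y) z = a * f x z + f y z) /\
  (forall x y : V, f x y = f y x).

Definition nonzero_space : Prop := exists v : V, v != 0.

Definition qf (f : V -> V -> R) (b : V) : R := f b b / 2.

Definition q_positive (f : V -> V -> R) (A : set V) : Prop :=
  A !=set0 /\ forall b c, A b -> A c -> 0 <= qf f (b - c).

Definition max_q_positive (f : V -> V -> R) (A : set V) : Prop :=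
  q_positive f A /\ forall A', q_positive f A' -> A `<=` A' -> A' = A.

Definition pi_set (f : V -> V -> R) (A : set V) : set V :=
  [set b | forall a, A a -> 0 <= qf f (b - a)].

Definition premax_q_positive (f : V -> V -> R) (P : set V) : Prop :=
  exists! M : set V, max_q_positive f M /\ P `<=` M.

Definition affine_set (A : set V) : Prop :=
  forall (x y : V) (t : R), A x -> A y -> A (t *: x + (1 - t) *: y).

End SSD.

(* Main.v *)
Require Import Defs.
From HB Require Import structures.
From mathcomp Require Import all_boot all_order all_algebra.
From mathcomp Require Import boolp classical_sets reals.
From mathcomp Require Import ring lra.
Set Implicit Arguments. Unset Strict Implicit. Unset Printing Implicit Defensive.
Import Order.TTheory GRing.Theory Num.Theory.
Local Open Scope ring_scope.
Local Open Scope classical_set_scope.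

Lemma comb4 (R : realType) (V : lmodType R) (x y w p : V) : exists L : R -> R -> R -> R -> V,
  [/\ forall a b c d a' b' c' d', L a b c d + L a' b' c' d' = L (a + a') (b + b') (c + c') (d + d'),
      forall k a b c d, k *: L a b c d = L (k * a) (k * b) (k * c) (k * d),
      forall a b c d, - L a b c d = L (- a) (- b) (- c) (- d),
      x = L 1 0 0 0 /\ y = L 0 1 0 0 & w = L 0 0 1 0 /\ p = L 0 0 0 1].
Proof.
exists (fun a b c d => a *: x + b *: y + c *: w + d *: p); split.
- move=> *; rewrite !scalerDl addrACA; congr (_ + _); rewrite addrACA; congr (_ + _).
  by rewrite addrACA.
- by move=> *; rewrite !scalerDr !scalerA.
- by move=> *; rewrite !opprD !scaleNr.
- by rewrite !scale1r !scale0r !addr0 !add0r.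
- by rewrite !scale1r !scale0r !addr0 !add0r.
Qed.

Ltac vecpre x y w p :=
  let L := fresh "L" in let LD := fresh in let LZ := fresh in let LN := fresh in
  let Ex := fresh in let Ey := fresh in let Ew := fresh in let Ep := fresh in
  have [L [LD LZ LN [Ex Ey] [Ew Ep]]] := comb4 x y w p;
  rewrite ?Ex ?Ey ?Ew ?Ep; rewrite !(LN, LZ, LD); congr L.
Ltac vec x y w p := vecpre x y w p; first [ring | by field].

Section S.
Variables (R : realType) (V : lmodType R) (f : V -> V -> R).
Hypothesis hf : sym_bilinear f.

Lemma f0l z : f 0 z = 0.
Proof. have := hf.1 1 0 0 z; rewrite scaler0 addr0 mul1r => h; lra. Qed.

Lemma fZl a x z : f (a *: x) z = a * f x z.
Proof. by have := hf.1 a x 0 z; rewrite addr0 f0l addr0. Qed.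

Lemma fZr a x z : f z (a *: x) = a * f z x.
Proof. by rewrite hf.2 fZl hf.2. Qed.

Lemma qfZ a x : qf f (a *: x) = a ^+ 2 * qf f x.
Proof. rewrite /qf fZl fZr; ring. Qed.

Lemma qfN x : qf f (- x) = qf f x.
Proof. by rewrite -scaleN1r qfZ expr2 mulN1r opprK mul1r. Qed.

Lemma qfZ_ge0 a x : 0 <= qf f x -> 0 <= qf f (a *: x).
Proof. by move=> h; rewrite qfZ mulr_ge0 // sqr_ge0. Qed.

Variable P : set V.
Hypothesis hPa : affine_set P.
Hypothesis hPq : q_positive f P.
Let Pi := pi_set f P.

Lemma P_sub_Pi : P `<=` Pi.
Proof. by move=> b Pb a Pa; apply: hPq.2. Qed.

Lemma P_shift u w v : P u -> P w -> P v -> P (u + w - v).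
Proof.
move=> Pu Pw Pv.
have Pm := hPa (2^-1) Pu Pw.
have := hPa 2 Pm Pv.
have -> : 2 *: (2^-1 *: u + (1 - 2^-1) *: w) + (1 - 2) *: v = u + w - v by vec u w v v.
done.
Qed.

Lemma Pi_trans b p w : Pi b -> P p -> P w -> Pi (b + (w - p)).
Proof.
move=> Pib Pp Pw w' Pw'.
have -> : b + (w - p) - w' = b - (w' + p - w) by vec b w p w'.
by apply: Pib; apply: P_shift.
Qed.

Lemma Pi_scale b p s : Pi b -> P p -> Pi (p + s *: (b - p)).
Proof.
move=> Pib Pp w Pw.
have [->|s0] := eqVneq s 0.
  by rewrite scale0r addr0; apply: hPq.2.
have -> : p + s *: (b - p) - w = s *: (b - (s^-1 *: w + (1 - s^-1) *: p)).
  by vecpre b p w w; field.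
by apply: qfZ_ge0; apply: Pib; apply: hPa.
Qed.


Definition qpp (A : set V) := forall u v, A u -> A v -> 0 <= qf f (u - v).

Lemma qpp_affine : qpp Pi -> affine_set Pi.
Proof.
move=> hq x y t Pix Piy w Pw.
have [p0 Pp0] := hPq.1.
have HA : Pi (p0 + t *: (x - p0)) by apply: Pi_scale.
have HC : Pi ((p0 + (t - 1) *: (y - p0)) + (w - p0)).
  by apply: Pi_trans => //; apply: Pi_scale.
have -> : t *: x + (1 - t) *: y - w =
   (p0 + t *: (x - p0)) - ((p0 + (t - 1) *: (y - p0)) + (w - p0)) by vec x y w p0.
exact: hq.
Qed.

Lemma affine_qpp : affine_set Pi -> qpp Pi.
Proof.
move=> ha a b Pia Pib.
have [p0 Pp0] := hPq.1.
have Hb' : Pi (p0 + (-1) *: (b - p0)) by apply: Pi_scale.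
have := ha _ _ (2^-1) Pia Hb' p0 Pp0.
move=> /(qfZ_ge0 2).
have -> : 2 *: (2^-1 *: a + (1 - 2^-1) *: (p0 + (-1) *: (b - p0)) - p0) = a - b by vec a b p0 p0.
done.
Qed.

Lemma qf0 : qf f 0 = 0.
Proof. by rewrite /qf f0l mul0r. Qed.

End S.

Theorem mainTheorem6 (R : realType) (V : lmodType R) (f : V -> V -> R)
  (P : set V) :
  sym_bilinear f -> nonzero_space V ->
  affine_set P -> q_positive f P ->
  (premax_q_positive f P <-> affine_set (pi_set f P)).
Proof.
move=> hf _ hPa hPq.
have PsubPi := P_sub_Pi hPq.
have subPi : forall M, q_positive f M -> P `<=` M -> M `<=` pi_set f P.
  by move=> M hM PM m Mm p Pp; apply: hM.2 => //; apply: PM.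
split.
- move=> [M [[Mmax PM] Muniq]].
  apply: (qpp_affine hf hPa hPq).
  suff PiM : pi_set f P `<=` M by move=> u v /PiM Mu /PiM Mv; apply: Mmax.1.2.
  move=> b Pib.
  pose S := P `|` [set b].
  have qS : qpp f S.
    move=> u v [Pu|->] [Pv|->].
    - exact: hPq.2.
    - by rewrite -opprB qfN //; apply: Pib.
    - exact: Pib.
    - by rewrite subrr qf0.
  have [A [qA Amax]] : exists A, qpp f (S `|` A) /\ forall B, A `<` B -> ~ qpp f (S `|` B).
    apply: (Zorn_bigcup (P := fun A => qpp f (S `|` A))) => F FP Ftot.
    have key : forall u, (S `|` \bigcup_(X in F) X) u -> S u \/ exists2 X, F X & X u.
      by move=> u [Su|[X FX Xu]]; [left|right; exists X].
    move=> u v /key [Su|[X FX Xu]] /key [Sv|[Y FY Yv]].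
    - exact: qS.
    - by apply: (FP Y FY); [left|right].
    - by apply: (FP X FX); [right|left].
    - have [XY|YX] := Ftot X Y FX FY.
      + by apply: (FP Y FY); right => //; apply: XY.
      + by apply: (FP X FX); right => //; apply: YX.
  have Mmax' : max_q_positive f (S `|` A).
    split; first by split => //; exists b; left; right.
    move=> A'' [_ qA''] sub.
    have A''A : A'' `<=` A.
      apply: contrapT => nsub; apply: (Amax A'') => //.
        by split => // x Ax; apply: sub; right.
      have -> : S `|` A'' = A''.
        by rewrite eqEsubset; split => x; [case=> // Sx; apply: sub; left|right].
      exact: qA''.
    rewrite eqEsubset; split => // x /A''A; by right.
  have := Muniq _ (conj Mmax' (fun x Px => or_introl (or_introl Px))).
  by move=> ->; left; right.
- move=> haff.
  have qPi := affine_qpp hf hPa hPq haff.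
  have [p0 Pp0] := hPq.1.
  have qposPi : q_positive f (pi_set f P) by split => //; exists p0; apply: PsubPi.
  have maxPi : max_q_positive f (pi_set f P).
    split => // A' hA' sub; rewrite eqEsubset; split => //.
    by apply: subPi => // x /PsubPi; apply: sub.
  exists (pi_set f P); split; first by split.
  move=> M' [[hM' Mmax'] PM'].
  apply: Mmax' => //; exact: subPi.
Qed.
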